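(* Let $P$ be a program and $G$ a goal. If every SLD derivation of $G$ in $P$ is finite, independently of the selection rule used (i.e. for arbitrary choices of the selected atom at each step), then every RSLD derivation of $G$ in $P$ is finite.
   Context: Goals are finite lists of atoms; a clause is $h\leftarrow B$ with $h$ an atom and $B$ a goal; a program is a finite set of clauses. For goals regarded as lists, $N\subseteq_L G$ means $N$ is a subsequence of $G$, and $G-N$ denotes the list of deleted atoms. $var(E)$ is the set of variables of $E$. If $G=a_1,\dots,a_k$, $c=(h\leftarrow B)$, $\xi$ a renaming and $\theta$ an idempotent relevant mgu of $h\xi$ and some $a_i$, then $(a_1,\dots,a_{i-1},B\xi,a_{i+1},\dots,a_k)\theta$ is a resolvent of $G$ and $c$. An SLD derivation of $G_0$ in $P$ is a finite or infinite sequence $G_0\xrightarrow{c_0\xi_0,\theta_0}G_1\xrightarrow{c_1\xi_1,\theta_1}\cdots$ of such steps with $c_j\in P$ and $var(c_j\xi_j)\cap(var(G_0)\cup var(c_0\xi_0)\cup\dots\cup var(c_{j-1}\xi_{j-1}))=\emptyset$. Reduced goal: $N$ is a reduced goal of $G$ by the substitution $\tau$ up to the variable set $X$, written $G>>^{\tau}N$, if (i) $N\subseteq_L G$, (ii) for every atom $b$ of $G-N$, $b\tau$ occurs in $N$, (iii) $x\tau=x$ for every $x\in var(N)\cup X$. RSLD derivation of $G_0$ in $P$: a finite or infinite sequence $G_0>>^{\alpha_0}N_0\xrightarrow{c_0\xi_0,\theta_0}G_1>>^{\alpha_1}N_1\xrightarrow{c_1\xi_1,\theta_1}G_2\cdots$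 where each $N_j\xrightarrow{c_j\xi_j,\theta_j}G_{j+1}$ is an SLD resolution step with $c_j\in P$, $var(c_j\xi_j)\cap(var(G_0)\cup var(c_0\xi_0)\cup\dots\cup var(c_{j-1}\xi_{j-1}))=\emptyset$, and $G_j>>^{\alpha_j}N_j$ up to $var(G_0\theta_0\cdots\theta_{j-1})$. *)

(* Defs.v *)
From Stdlib Require Import List Arith.
Import ListNotations.

Inductive term : Type :=
| Var : nat -> term
| Fn : nat -> list term -> term.

Inductive atom : Type :=
| Atom : nat -> list term -> atom.

Definition goal := list atom.
(** a clause [h <- B] *)
Definition clause := (atom * goal)%type.
Definition program := list clause.

Definition subst := nat -> term.

Fixpoint tsubst (s : subst) (t : term) : term :=
  match t with
  | Var x => s x
  | Fn f ts => Fn f (map (tsubst s) ts)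
  end.

Definition asubst (s : subst) (a : atom) : atom :=
  match a with Atom p ts => Atom p (map (tsubst s) ts) end.

Definition gsubst (s : subst) (G : goal) : goal := map (asubst s) G.

Definition csubst (s : subst) (c : clause) : clause :=
  (asubst s (fst c), gsubst s (snd c)).

Fixpoint tvars (t : term) : list nat :=
  match t with
  | Var x => [x]
  | Fn _ ts => flat_map tvars ts
  end.

Definition avars (a : atom) : list nat :=
  match a with Atom _ ts => flat_map tvars ts end.

Definition gvars (G : goal) : list nat := flat_map avars G.

Definition cvars (c : clause) : list nat := avars (fst c) ++ gvars (snd c).

Definition renaming (xi : subst) : Prop :=
  exists (pi pinv : nat -> nat),
    (forall x, pinv (pi x) = x) /\ (forall x, pi (pinv x) = x) /\
    (forall x, xi x = Var (pi x)).

Definition unifier (th : subst) (a b : atom) : Prop := asubst th a = asubst th b.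

Definition mgu (th : subst) (a b : atom) : Prop :=
  unifier th a b /\
  forall sg, unifier sg a b -> exists dl : subst, forall x, tsubst dl (th x) = sg x.

Definition idempotent (th : subst) : Prop := forall x, tsubst th (th x) = th x.

Definition relevant (th : subst) (a b : atom) : Prop :=
  forall x, th x <> Var x ->
    In x (avars a ++ avars b) /\
    (forall y, In y (tvars (th x)) -> In y (avars a ++ avars b)).

Definition resolvent (G : goal) (c : clause) (xi th : subst) (G' : goal) : Prop :=
  exists G1 a G2,
    G = G1 ++ a :: G2 /\
    renaming xi /\
    idempotent th /\
    relevant th (asubst xi (fst c)) a /\
    mgu th (asubst xi (fst c)) a /\
    G' = gsubst th (G1 ++ gsubst xi (snd c) ++ G2).

Definition std_apart (G0 : goal) (c : nat -> clause) (xi : nat -> subst) (j : nat) : Prop :=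
  forall x, In x (cvars (csubst (xi j) (c j))) ->
    ~ In x (gvars G0) /\
    (forall k, k < j -> ~ In x (cvars (csubst (xi k) (c k)))).

Definition infinite_SLD (P : program) (G0 : goal) : Prop :=
  exists (G : nat -> goal) (c : nat -> clause) (xi th : nat -> subst),
    G 0 = G0 /\
    forall j, In (c j) P /\ std_apart G0 c xi j /\
              resolvent (G j) (c j) (xi j) (th j) (G (S j)).

Definition all_SLD_finite (P : program) (G0 : goal) : Prop := ~ infinite_SLD P G0.

Fixpoint mask {A : Type} (m : list bool) (s : list A) : list A :=
  match m, s with
  | b :: m', x :: s' => if b then x :: mask m' s' else mask m' s'
  | _, _ => []
  end.

(** Reduced goal: [G >>^tau N] up to the variable set [X].
    N is the subsequence of G selected by [m]; G - N is the complementary list. *)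
Definition reduced (G N : goal) (tau : subst) (X : nat -> Prop) : Prop :=
  exists m : list bool,
    length m = length G /\
    N = mask m G /\
    (forall b, In b (mask (map negb m) G) -> In (asubst tau b) N) /\
    (forall x, In x (gvars N) \/ X x -> tau x = Var x).

Fixpoint gcomp (th : nat -> subst) (G0 : goal) (j : nat) : goal :=
  match j with
  | 0 => G0
  | S j' => gsubst (th j') (gcomp th G0 j')
  end.

Definition infinite_RSLD (P : program) (G0 : goal) : Prop :=
  exists (G N : nat -> goal) (al : nat -> subst) (c : nat -> clause) (xi th : nat -> subst),
    G 0 = G0 /\
    forall j, In (c j) P /\ std_apart G0 c xi j /\
              reduced (G j) (N j) (al j) (fun x => In x (gvars (gcomp th G0 j))) /\
              resolvent (N j) (c j) (xi j) (th j) (G (S j)).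

Definition all_RSLD_finite (P : program) (G0 : goal) : Prop := ~ infinite_RSLD P G0.

(* Main.v *)
Require Import Defs.
From Stdlib Require Import List Arith.
From Stdlib Require Import ClassicalEpsilon.
Import ListNotations.

Inductive sub {A : Type} : list A -> list A -> Prop :=
| sub_nil : sub [] []
| sub_skip x l1 l2 : sub l1 l2 -> sub l1 (x :: l2)
| sub_keep x l1 l2 : sub l1 l2 -> sub (x :: l1) (x :: l2).

Lemma sub_nil_l {A} (l : list A) : sub [] l.
Proof. induction l; constructor; auto. Qed.

Lemma sub_refl {A} (l : list A) : sub l l.
Proof. induction l; [constructor | apply sub_keep; auto]. Qed.

Lemma sub_app {A} (a b c d : list A) : sub a b -> sub c d -> sub (a ++ c) (b ++ d).
Proof. intros H1 H2; induction H1; simpl; [auto | apply sub_skip; auto | apply sub_keep; auto]. Qed.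

Lemma sub_map {A B} (f : A -> B) a b : sub a b -> sub (map f a) (map f b).
Proof. intros H; induction H; simpl; [apply sub_nil | apply sub_skip; auto | apply sub_keep; auto]. Qed.

Lemma mask_sub {A} (m : list bool) (G : list A) : sub (mask m G) G.
Proof.
  revert m; induction G as [|x G IH]; intros [|b m]; simpl.
  - constructor.
  - constructor.
  - apply sub_nil_l.
  - destruct b; [apply sub_keep | apply sub_skip]; auto.
Qed.

Lemma sub_split {A} (H : list A) : forall N1 a N2, sub (N1 ++ a :: N2) H ->
  exists H1 H2, H = H1 ++ a :: H2 /\ sub N1 H1 /\ sub N2 H2.
Proof.
  induction H as [|x H IH]; intros N1 a N2 Hs.
  - inversion Hs; destruct N1; discriminate.
  - inversion Hs as [|x' l1 l2 Hs' E1 E2|x' l1 l2 Hs' E1 E2]; subst.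
    + destruct (IH _ _ _ Hs') as (H1 & H3 & E & S1 & S2).
      exists (x :: H1), H3; subst; repeat split; auto. apply sub_skip; auto.
    + destruct N1 as [|y N1]; simpl in *.
      * injection E1; intros; subst. exists [], H; repeat split; auto. apply sub_nil_l.
      * injection E1; intros; subst.
        destruct (IH _ _ _ Hs') as (H1 & H4 & E & S1 & S2).
        exists (y :: H1), H4; subst; repeat split; auto. apply sub_keep; auto.
Qed.

Lemma lift_step N H c xi th G' :
  sub N H -> resolvent N c xi th G' ->
  exists H', sub G' H' /\ resolvent H c xi th H'.
Proof.
  intros Hs (N1 & a & N2 & E & R & I & Rl & M & EG).
  subst N. destruct (sub_split _ _ _ _ Hs) as (H1 & H2 & EH & S1 & S2).
  exists (gsubst th (H1 ++ gsubst xi (snd c) ++ H2)); split.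
  - subst G'. unfold gsubst at 1 3. apply sub_map.
    apply sub_app; auto. apply sub_app; auto. apply sub_refl.
  - exists H1, a, H2; split; [exact EH|]; split; [exact R|]; split; [exact I|]; split; [exact Rl|]; split; [exact M|reflexivity].
Qed.

Lemma sub_trans {A} (a b c : list A) : sub a b -> sub b c -> sub a c.
Proof.
  intros H1 H2; revert a H1; induction H2; intros a H1.
  - exact H1.
  - apply sub_skip; auto.
  - inversion H1; subst; [apply sub_skip | apply sub_keep]; auto.
Qed.

Theorem theoremt1p1p1 (P : program) (G0 : goal) :
  all_SLD_finite P G0 -> all_RSLD_finite P G0.
Proof.
  intros Hfin (G & N & al & c & xi & th & E0 & Hj).
  apply Hfin.
  pose (next := fun j (H : goal) =>
    epsilon (inhabits (@nil atom))
      (fun H' => sub (G j) H -> sub (G (S j)) H' /\ resolvent H (c j) (xi j) (th j) H')).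
  assert (Hnext : forall j H, sub (G j) H ->
            sub (G (S j)) (next j H) /\ resolvent H (c j) (xi j) (th j) (next j H)).
  { intros j H Hs. unfold next.
    apply (epsilon_spec (inhabits (@nil atom))
      (fun H' => sub (G j) H -> sub (G (S j)) H' /\ resolvent H (c j) (xi j) (th j) H')); auto.
    destruct (Hj j) as (_ & _ & (m & _ & EN & _) & Rs).
    assert (sub (N j) H) by (rewrite EN; eapply sub_trans; [apply mask_sub | exact Hs]).
    destruct (lift_step _ _ _ _ _ _ H0 Rs) as (H' & S' & R').
    exists H'; intros _; auto. }
  pose (Hs := fix Hs j := match j with 0 => G0 | S j' => next j' (Hs j') end).
  assert (Inv : forall j, sub (G j) (Hs j)).
  { induction j; simpl. rewrite E0; apply sub_refl. apply Hnext; auto. }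
  exists Hs, c, xi, th; split; [reflexivity|].
  intros j; destruct (Hj j) as (Hin & Hsa & _ & _).
  split; [exact Hin|]; split; [exact Hsa|]. apply (Hnext j (Hs j) (Inv j)).
Qed.
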